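(* Let $p\geq 2$, $q\geq 1$ and $k_1\geq \cdots\geq k_q\geq 1$ be fixed integers, and let $H$ be an $n$-vertex $S^{p+1}_{k_1,\dots,k_q}$-free graph with maximum spectral radius among all such graphs. Then $\rho(H)\geq \frac{p-1}{p}n+O(1)$, where the implied constant depends only on $p,q$ (and not on $n$).
   Context: $S_{k_1,\dots,k_q}$ is the vertex-disjoint union of stars with $k_1,\dots,k_q$ edges. For a graph $G$ and integer $p\ge 2$, the edge blow-up $G^{p+1}$ is obtained by replacing each edge of $G$ by a clique of order $p+1$ containing it, with all new vertices of the different cliques distinct. $\rho(H)$ is the largest eigenvalue of the adjacency matrix of $H$. *)

(* Defs.v *)
From HB Require Import structures.
From mathcomp Require Import all_boot all_order all_algebra.
From mathcomp Require Import boolp classical_sets reals.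
Set Implicit Arguments. Unset Strict Implicit. Unset Printing Implicit Defensive.
Import Order.TTheory GRing.Theory Num.Theory.
Local Open Scope ring_scope.
Local Open Scope classical_set_scope.

Definition simple_graph (V : finType) (e : rel V) : Prop :=
  symmetric e /\ irreflexive e.

Definition contains_copy (U V : finType) (F : rel U) (G : rel V) : Prop :=
  exists f : U -> V, injective f /\ (forall u w, F u w -> G (f u) (f w)).

Definition free_of (U V : finType) (F : rel U) (G : rel V) : Prop :=
  ~ contains_copy F G.

(* ---- The edge blow-up S^{p+1}_{k_1,...,k_q} ----
   Star i (i < q = size ks) has centre (i, None) and k_i leaves.
   Each edge {centre_i, leaf (i,j)} (j < k_i) is replaced by a clique of
   order p+1 on {centre_i} u {(i, Some (j,t)) | t < p}; the vertex with
   t = 0 is the original leaf, t = 1..p-1 are the p-1 new vertices.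
   Leaf indices j range over 'I_(\max k) and are restricted to j < k_i. *)
Definition kmax (ks : seq nat) : nat := \max_(k <- ks) k.

Definition SB_raw (ks : seq nat) (p : nat) : finType :=
  ('I_(size ks) * option ('I_(kmax ks) * 'I_p))%type.

Definition SB_valid (ks : seq nat) (p : nat) : pred (SB_raw ks p) :=
  fun v => match v.2 with
           | None => true
           | Some jt => (val jt.1 < nth 0%N ks (val v.1))%N
           end.

Definition SB_vert (ks : seq nat) (p : nat) : finType :=
  {v : SB_raw ks p | SB_valid v}.

Definition SB_edge (ks : seq nat) (p : nat) : rel (SB_vert ks p) :=
  fun u w =>
    let u := val u in let w := val w in
    (u.1 == w.1) &&
    match u.2, w.2 with
    | None, None => false
    | None, Some _ => true
    | Some _, None => true
    | Some jt, Some jt' => (jt.1 == jt'.1) && (jt.2 != jt'.2)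
    end.

Definition adjmx (R : realType) (n : nat) (G : rel 'I_n) : 'M[R]_n :=
  \matrix_(i, j) (G i j)%:R.

Definition spec_rad (R : realType) (n : nat) (G : rel 'I_n) : R :=
  sup [set a : R | eigenvalue (adjmx R G) a].

(* Main.v *)
Require Import Defs.
From HB Require Import structures.
From mathcomp Require Import all_boot all_order all_algebra zify.
From mathcomp Require Import boolp classical_sets reals.
Import Order.TTheory GRing.Theory Num.Theory.
Local Open Scope ring_scope.
Lemma eig_le (R : realType) n (G : rel 'I_n) a :
  eigenvalue (adjmx R G) a -> a <= n%:R.
Proof.
move/eigenvalueP => [v Hv nz].
have [i0 Hi0] : exists i0 : 'I_n, v 0 i0 != 0.
  apply/not_existsP => H; move/eqP: nz; apply; apply/matrixP => i j.
  rewrite ord1 mxE; have := H j; by case: eqP.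
case: (@arg_maxP _ R _ i0 predT (fun i => `|v 0 i|) isT) => k _ Hk.
have vk : 0 < `|v 0 k|.
  by apply: lt_le_trans (Hk i0 isT); rewrite normr_gt0.
have E : a * v 0 k = \sum_j v 0 j * (G j k)%:R.
  have := congr1 (fun M : 'M[R]_(1,n) => M 0 k) Hv; rewrite !mxE => <-.
  by apply: eq_bigr => j _; rewrite mxE.
have : `|a| * `|v 0 k| <= n%:R * `|v 0 k|.
  rewrite -normrM E; apply: le_trans (ler_norm_sum _ _ _) _.
  rewrite -[n in n%:R]card_ord -sumr_const mulr_suml.
  apply: ler_sum => j _; rewrite normrM mul1r.
  case: (G j k); rewrite /= ?normr1 ?mulr1 ?normr0 ?mulr0 //.
  exact: Hk.
rewrite ler_pM2r // => H; exact: le_trans (ler_norm _) H.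
Qed.

Lemma spec_rad_ge (R : realType) n (G : rel 'I_n) (v : 'rV[R]_n) a :
  v != 0 -> v *m adjmx R G = a *: v -> a <= spec_rad R G.
Proof.
move=> nz Hv; apply: ub_le_sup.
  by exists n%:R => x /= /eig_le.
by apply/eigenvalueP; exists v.
Qed.

Section CB.
Local Open Scope nat_scope.
Lemma count_blocks m p c : (0 < m)%N -> (c < p)%N ->
  (\sum_(0 <= i < p * m) (i %/ m != c : nat) = (p-1) * m)%N.
Proof.
move=> m0 cp.
rewrite (@big_cat_nat _ _ _ (c * m)) //=; last by nia.
rewrite (@big_cat_nat _ _ _ (c * m+m) (c * m)) //=; last first.
  nia.
  by rewrite leq_addr.
rewrite (@eq_big_nat _ _ _ 0 (c * m) _ (fun _ => 1)); last first.
  move=> i /andP[_ H]; have: i %/ m < c by rewrite ltn_divLR.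
  by rewrite ltn_neqAle => /andP[/negbTE ->].
rewrite (@eq_big_nat _ _ _ (c * m) (c * m+m) _ (fun _ => 0)); last first.
  move=> i /andP[H1 H2]; have E: i %/ m = c.
    apply/eqP; rewrite eqn_leq leq_divRL // H1 /= -ltnS ltn_divLR //. nia.
  by rewrite E eqxx.
rewrite (@eq_big_nat _ _ _ (c * m+m) (p * m) _ (fun _ => 1)); last first.
  move=> i /andP[H1 _]; have: c < i %/ m by rewrite -[c < _]/(c.+1 <= _) leq_divRL // mulSn; lia.
  by rewrite ltn_neqAle => /andP[/negbTE]; rewrite eq_sym => ->.
rewrite !sum_nat_const_nat. nia.
Qed.
End CB.

Definition tur (n p : nat) : rel 'I_n := fun i j =>
  [&& (i < p * (n %/ p))%N, (j < p * (n %/ p))%N & (i %/ (n %/ p) != j %/ (n %/ p))%N].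

Lemma tur_simple n p : simple_graph (tur n p).
Proof.
split.
  move=> i j; rewrite /tur; by rewrite andbCA eq_sym.
by move=> i; rewrite /tur eqxx !andbF.
Qed.

Lemma tur_free ks n p : (0 < size ks)%N -> (0 < nth 0%N ks 0)%N -> (0 < p)%N ->
  free_of (@SB_edge ks p) (tur n p).
Proof.
move=> s0 k0 p0 [f [finj fe]].
pose i0 : 'I_(size ks) := Ordinal s0.
have kpos : (0 < kmax ks)%N.
  apply: leq_trans k0 _; rewrite /kmax; apply: leq_bigmax_seq => //; exact: mem_nth.
pose j0 : 'I_(kmax ks) := Ordinal kpos.
pose t0 : 'I_p := Ordinal p0.
pose g (o : option 'I_p) : SB_vert ks p :=
  match o with
  | None => exist _ (i0, None) isT
  | Some t => exist _ (i0, Some (j0, t)) (k0 : SB_valid (ks:=ks) (p:=p) (i0, Some (j0, t)))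
  end.
have ge : forall x y, x != y -> SB_edge (g x) (g y).
  case=> [t|] [t1|] nxy; rewrite /SB_edge /= ?eqxx //=; try by rewrite eqxx in nxy.
  all: try by apply: contra nxy => /eqP ->.
have te : forall x y, x != y -> tur n p (f (g x)) (f (g y)).
  by move=> x y nxy; apply: fe; apply: ge.
set m := (n %/ p)%N.
have lt_pm : forall x, (f (g x) < p * m)%N.
  case=> [t|].
    by case/and3P: (te (Some t) None isT).
  by case/and3P: (te None (Some t0) isT).
have m0 : (0 < m)%N by have := lt_pm None; case: (m) => //; rewrite muln0.
have lt_p : forall x, (f (g x) %/ m < p)%N.
  by move=> x; rewrite ltn_divLR // mulnC.
pose h (x : option 'I_p) : 'I_p := insubd t0 (f (g x) %/ m)%N.
have hinj : injective h.
  move=> x y; rewrite /h => /(congr1 val); rewrite !val_insubd !lt_p => E.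
  case: (eqVneq x y) => // nxy.
  by have := te x y nxy; rewrite /tur -/m E eqxx !andbF.
have := leq_card h hinj; by rewrite card_option card_ord ltnn.
Qed.
Lemma tur_eig (R : realType) n p : (0 < n %/ p)%N ->
  let v := \row_(i < n) ((i < p * (n %/ p))%N%:R : R) in
  v *m adjmx R (tur n p) = ((p-1) * (n %/ p))%N%:R *: v.
Proof.
move=> m0 v; apply/rowP => j; rewrite !mxE.
under eq_bigr => i _ do rewrite !mxE -natrM.
rewrite -natr_sum -natrM; congr (_ %:R).
rewrite /tur; set m := (n %/ p)%N.
have pm_n : (p * m <= n)%N by rewrite /m mulnC; exact: leq_trunc_div.
case: (ltnP j (p * m)) => Hj; last first.
  rewrite muln0 big1 // => i _; by rewrite /= andbF muln0.
rewrite /= muln1.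
under eq_bigr => i _ do rewrite mulnb /= andbA andbb.
rewrite -(big_mkord xpredT (fun i => ((i < p * m) && (i %/ m != j %/ m))%N : nat)) /=.
rewrite (@big_cat_nat _ _ _ (p * m) 0 n _ _ (leq0n _) pm_n) /=.
rewrite [X in (_ + X)%N]big1_seq ?addn0; last first.
  move=> i; rewrite mem_index_iota => /and3P[_ H _]; by rewrite (leq_gtF H).

rewrite (@eq_big_nat _ _ _ 0 (p * m) _ (fun i => ((i %/ m) != (j %/ m))%N : nat)); last by move=> i /andP[_ ->].
apply: count_blocks => //.
by rewrite ltn_divLR // mulnC.
Qed.

Theorem lemma3p1 (R : realType) (p q : nat) :
  (2 <= p)%N -> (1 <= q)%N ->
  exists C : R,
    forall (ks : seq nat) (n : nat) (H : rel 'I_n),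
      size ks = q ->
      sorted geq ks ->
      all (fun k => 0 < k)%N ks ->
      simple_graph H ->
      free_of (@SB_edge ks p) H ->
      (forall G : rel 'I_n, simple_graph G -> free_of (@SB_edge ks p) G ->
         spec_rad R G <= spec_rad R H) ->
      (p - 1)%:R / p%:R * n%:R - C <= spec_rad R H.
Proof.
move=> p2 q1; exists p%:R => ks n H sz srt pos Hs Hf Hmax.
have s0 : (0 < size ks)%N by rewrite sz.
have k0 : (0 < nth 0%N ks 0)%N by apply: (allP pos); exact: mem_nth.
have p0 : (0 < p)%N by apply: leq_trans p2.
have Ht := Hmax _ (tur_simple n p) (@tur_free ks n p s0 k0 p0).
have lb : ((p-1) * (n %/ p))%N%:R <= spec_rad R H.
  case: (posnP (n %/ p)%N) => m0.
    rewrite m0 muln0.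
    case: (posnP n) => n0.
      rewrite /spec_rad.
      have -> : [set a : R | eigenvalue (adjmx R H) a]%classic = set0.
        move: H {Hs Hf Hmax Ht}; rewrite n0 => H.
        apply/seteqP; split => a //= /eigenvalueP [v _]; by rewrite (thinmx0 v) eqxx.
      by rewrite sup0.
    apply: le_trans Ht.
    apply: (@spec_rad_ge _ _ _ (const_mx 1)).
      apply/eqP => /rowP /(_ (Ordinal n0)); rewrite !mxE; apply/eqP; exact: oner_neq0.
    apply/rowP => j; rewrite !mxE mul0r big1 // => i _.
    by rewrite !mxE /tur m0 muln0 ltn0 /= mulr0.
  apply: le_trans Ht.
  have E := @tur_eig R n p m0; rewrite /= in E.
  apply: (@spec_rad_ge R n (tur n p) _ _ _ E).
  have n0 : (0 < n)%N by apply: leq_trans m0 _; exact: leq_div.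
  apply/eqP => /rowP /(_ (Ordinal n0)); rewrite !mxE /=.
  rewrite muln_gt0 p0 m0 /=; apply/eqP; exact: oner_neq0.
apply: le_trans lb.
rewrite lerBlDr mulrAC -natrM ler_pdivrMr ?ltr0n //.
rewrite -natrD -natrM ler_nat.
have := divn_eq n p; have := ltn_pmod n p0.
move: (n %/ p)%N (n %% p)%N => m r; nia.
Qed.
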